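(* Let $k\ge1$, $0\le r<k$ and $n\ge0$ be integers. Then $$\sum_{j=0}^n(-1)^{n-j}\begin{bmatrix} n+r\\ n-j\end{bmatrix}_q q^{(k-1)\left(\binom{n}{2}-\binom{j}{2}\right)}F^{(k)}_{kj+r}(x;q)=x^{n+r}F^{(k)}_{(k-1)n}(x;q).$$
   Context: Here $q$ is an indeterminate. For integers $m\ge0$ and $j$, $\begin{bmatrix} m\\ j\end{bmatrix}_q=\frac{(1-q^m)(1-q^{m-1})\cdots(1-q^{m-j+1})}{(1-q)(1-q^2)\cdots(1-q^j)}$ for $0\le j\le m$ and $0$ otherwise. For an integer $k\ge1$, the $q$-Fibonacci polynomials $F^{(k)}_n(x;q)$ ($n\ge0$) are defined by $F^{(k)}_n(x;q)=x^n$ for $0\le n<k$ and $F^{(k)}_{n+k}(x;q)=xF^{(k)}_{n+k-1}(x;q)+q^nF^{(k)}_n(x;q)$ for $n\ge0$. *)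

(* Defs.v *)
From HB Require Import structures.
From mathcomp Require Import all_boot all_order all_algebra.
Set Implicit Arguments. Unset Strict Implicit. Unset Printing Implicit Defensive.
Import Order.TTheory GRing.Theory Num.Theory.
Local Open Scope ring_scope.

Definition qbinom (F : fieldType) (q : F) (m j : nat) : F :=
  if (j <= m)%N then
    (\prod_(i < j) (1 - q ^+ (m - i)%N)) / (\prod_(i < j) (1 - q ^+ i.+1))
  else 0.

(* q-Fibonacci polynomials F^(k)_n(x;q), k >= 1:
   F_n = x^n for n < k, and F_{m} = x F_{m-1} + q^(m-k) F_{m-k} for m >= k
   (i.e. F_{n+k} = x F_{n+k-1} + q^n F_n).
   qfib_seq k x q N is the list [F_0; ...; F_N]. *)
Fixpoint qfib_seq (R : comNzRingType) (k : nat) (x q : R) (N : nat) : seq R :=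
  match N with
  | 0%N => [:: 1]
  | N'.+1 =>
      let s := qfib_seq k x q N' in
      rcons s (if (N < k)%N then x ^+ N
               else x * nth 0 s N' + q ^+ (N - k) * nth 0 s (N - k))
  end.

Definition qfib (R : comNzRingType) (k : nat) (x q : R) (n : nat) : R :=
  nth 0 (qfib_seq k x q n) n.

(* Main.v *)
Require Import Defs.
From HB Require Import structures.
From mathcomp Require Import all_boot all_order all_algebra.
Import Order.TTheory GRing.Theory Num.Theory.
Local Open Scope ring_scope.

From mathcomp Require Import zify ring.


Section QB.
Variable F : fieldType.
Variable q : F.
Hypothesis hq : forall i : nat, (0 < i)%N -> q ^+ i != 1.

Lemma nz1 i : (0 < i)%N -> 1 - q ^+ i != 0.
Proof. move=> h; rewrite subr_eq0 eq_sym; exact: hq. Qed.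

Lemma den_nz t : \prod_(i < t) (1 - q ^+ i.+1) != 0.
Proof. apply/prodf_neq0 => i _; exact: nz1. Qed.

Lemma qb0 N : qbinom q N 0 = 1.
Proof. by rewrite /qbinom leq0n !big_ord0 divr1. Qed.

Lemma qb_gt N t : (N < t)%N -> qbinom q N t = 0.
Proof. by rewrite /qbinom ltnNge => /negbTE ->. Qed.

Lemma R1 N t : (t <= N)%N ->
  qbinom q N.+1 t.+1 * (1 - q ^+ t.+1) = (1 - q ^+ N.+1) * qbinom q N t.
Proof.
move=> h; rewrite /qbinom h ltnS h big_ord_recl big_ord_recr /= subn0.
have Hd := den_nz t.
have -> : \prod_(i < t) (1 - q ^+ (N.+1 - bump 0 i)) = \prod_(i < t) (1 - q ^+ (N - i)).
  by apply: eq_bigr => i _; rewrite /bump /= add1n subSS.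
field; apply/andP; split => //; exact: nz1.
Qed.

Lemma R2 N t : (t < N)%N ->
  qbinom q N t.+1 * (1 - q ^+ t.+1) = (1 - q ^+ (N - t)) * qbinom q N t.
Proof.
move=> h; rewrite /qbinom h (ltnW h) big_ord_recr big_ord_recr /=.
have Hd := den_nz t.
field; apply/andP; split => //; exact: nz1.
Qed.

Lemma qbnn N : qbinom q N N = 1.
Proof.
elim: N => [|N IH]; first exact: qb0.
have h := R1 N N (leqnn N); rewrite IH mulr1 in h.
have hn := nz1 _ (ltn0Sn N).
by apply: (mulIf hn); rewrite h mul1r.
Qed.

Lemma pascal1 N t : qbinom q N.+1 t.+1 = qbinom q N t + q ^+ t.+1 * qbinom q N t.+1.
Proof.
case: (ltngtP t N) => h.
- have hn := nz1 _ (ltn0Sn t).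
  apply: (mulIf hn); rewrite R1 ?(ltnW h) // [RHS]mulrDl -[in RHS]mulrA (R2 N t h).
  have -> : q ^+ N.+1 = q ^+ t.+1 * q ^+ (N - t).
    by rewrite -exprD; congr (_ ^+ _); lia.
  ring.
- by rewrite !qb_gt ?mulr0 ?addr0 //; lia.
- by rewrite h !qbnn qb_gt ?mulr0 ?addr0.
Qed.

Lemma pascal2 N t : qbinom q N.+1 t.+1 = qbinom q N t.+1 + q ^+ (N - t) * qbinom q N t.
Proof.
case: (ltngtP t N) => h.
- have hn := nz1 _ (ltn0Sn t).
  apply: (mulIf hn); rewrite R1 ?(ltnW h) // [RHS]mulrDl (R2 N t h).
  have -> : q ^+ N.+1 = q ^+ t.+1 * q ^+ (N - t).
    by rewrite -exprD; congr (_ ^+ _); lia.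
  ring.
- by rewrite !qb_gt ?mulr0 ?addr0 //; lia.
- by rewrite h !qbnn qb_gt ?subnn ?expr0 ?mul1r ?add0r.
Qed.
End QB.


Section PP.
Variable F : fieldType.
Variable q : F.
Hypothesis hq : forall i : nat, (0 < i)%N -> q ^+ i != 1.

Definition P m c B := \sum_(0 <= i < m.+1)
  (-1) ^+ (m - i) * qbinom q (m + c) (m - i) * qbinom q (B + c + i) i
  * q ^+ ('C(i, 2) + B * (m - i)).

Lemma bin2S i : 'C(i.+1, 2) = ('C(i, 2) + i)%N.
Proof. by rewrite binS bin1. Qed.

Lemma rec2 m c B : P m.+1 c.+1 B = P m.+1 c B.+1 - q ^+ B * P m c.+1 B.
Proof.
rewrite /P big_nat_recr //= [in RHS]big_nat_recr //= subnn !qb0 !expr0 !muln0 !addn0.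
rewrite (_ : (B.+1 + c + m.+1 = B + c.+1 + m.+1)%N); last lia.
rewrite addrAC; congr (_ + _); rewrite big_distrr -sumrB /=.
apply: eq_big_nat => i /andP [_ hi].
have e1 : (m.+1 - i = (m - i).+1)%N by lia.
have H1 : qbinom q (m.+1 + c.+1) (m.+1 - i) = qbinom q (m + c.+1) (m - i)
   + q ^+ (m.+1 - i) * qbinom q (m.+1 + c) (m.+1 - i).
  rewrite e1 (_ : (m.+1 + c.+1 = (m + c.+1).+1)%N); last lia.
  by rewrite (@pascal1 F q hq) (_ : (m + c.+1 = m.+1 + c)%N) //; lia.
have H2 : (B + c.+1 + i = B.+1 + c + i)%N by lia.
have H3 : q ^+ ('C(i,2) + B.+1 * (m.+1 - i)) = q ^+ (m.+1 - i) * q ^+ ('C(i,2) + B * (m.+1 - i)).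
  by rewrite -exprD; congr (_ ^+ _); nia.
have H4 : q ^+ ('C(i,2) + B * (m.+1 - i)) = q ^+ B * q ^+ ('C(i,2) + B * (m - i)).
  by rewrite -exprD; congr (_ ^+ _); rewrite e1; nia.
have H5 : (-1) ^+ (m.+1 - i) = - (-1) ^+ (m - i) :> F by rewrite e1 exprS mulN1r.
rewrite H1 -{1}H2 H3 H4 H5 H2; ring.
Qed.

Lemma rec1 m c B : P m.+1 c B.+1 = q ^+ m.+1 * P m.+1 c B + q ^+ m * P m c.+1 B.
Proof.
rewrite /P (big_nat_recl m.+1) // (big_nat_recl m.+1) // mulrDr addrAC -addrA.
congr (_ + _).
  rewrite !subn0 !addn0 !qb0 !mulr1 add0n.
  rewrite (_ : q ^+ (B.+1 * m.+1) = q ^+ m.+1 * q ^+ (B * m.+1)); first ring.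
  by rewrite -exprD; congr (_ ^+ _); nia.
rewrite !big_distrr -big_split /=.
apply: eq_big_nat => i /andP [_ hi].
have e1 : (m.+1 - i.+1 = m - i)%N by lia.
have H1 : qbinom q (B.+1 + c + i.+1) i.+1 = qbinom q (B + c.+1 + i) i
   + q ^+ i.+1 * qbinom q (B + c + i.+1) i.+1.
  rewrite (_ : (B.+1 + c + i.+1 = (B + c + i.+1).+1)%N); last lia.
  by rewrite (@pascal1 F q hq) (_ : (B + c + i.+1 = B + c.+1 + i)%N) //; lia.
have H2 : (m.+1 + c = m + c.+1)%N by lia.
have H3 : q ^+ i.+1 * q ^+ ('C(i.+1,2) + B.+1 * (m.+1 - i.+1)) = q ^+ m.+1 * q ^+ ('C(i.+1,2) + B * (m.+1 - i.+1)).
  by rewrite -!exprD; congr (_ ^+ _); rewrite e1; nia.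
have H4 : q ^+ ('C(i.+1,2) + B.+1 * (m.+1 - i.+1)) = q ^+ m * q ^+ ('C(i,2) + B * (m - i)).
  by rewrite -exprD; congr (_ ^+ _); rewrite e1 bin2S; nia.
rewrite H1 mulrDr mulrDl.
rewrite -H2; congr (_ + _).
  rewrite H4 e1; ring.
rewrite [LHS](_ : _ = ((-1) ^+ (m.+1 - i.+1) * qbinom q (m.+1 + c) (m.+1 - i.+1) * qbinom q (B + c + i.+1) i.+1) * (q ^+ i.+1 * q ^+ ('C(i.+1, 2) + B.+1 * (m.+1 - i.+1)))); last ring.
rewrite H3; ring.
Qed.

Definition Q m := \sum_(0 <= i < m.+1) (-1) ^+ (m - i) * qbinom q m (m - i) * q ^+ 'C(i, 2).

Lemma P00 m : P m 0 0 = Q m.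
Proof.
apply: eq_bigr => i _; by rewrite !addn0 add0n (@qbnn F q hq) mulr1.
Qed.

Lemma Qrec m : Q m.+1 = (q ^+ m - 1) * Q m.
Proof.
pose B' i := (-1) ^+ (m.+1 - i) * q ^+ (m.+1 - i) * qbinom q m (m.+1 - i) * q ^+ 'C(i, 2).
have EB : q ^+ m * Q m = \sum_(0 <= i < m.+1) B' i + B' m.+1.
  rewrite -big_nat_recr // big_nat_recl //= {1}/B' subn0 qb_gt // mulr0 !mul0r add0r.
  rewrite /Q big_distrr /=; apply: eq_big_nat => i /andP [_ hi].
  rewrite /B' subSS bin2S exprD.
  have e : q ^+ m = q ^+ (m - i) * q ^+ i by rewrite -exprD subnK.
  rewrite {1}e; ring.
rewrite mulrBl EB mul1r /Q big_nat_recr //= subnn qb0 addrAC.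
congr (_ + _); last first.
  by rewrite /B' subnn !expr0 qb0 !mul1r.
rewrite -sumrB; apply: eq_big_nat => i /andP [_ hi].
have e1 : (m.+1 - i = (m - i).+1)%N by lia.
rewrite /B' e1 (@pascal1 F q hq) exprS; ring.
Qed.

Lemma Qval m : Q m = (m == 0)%:R.
Proof.
case: m => [|m]; first by rewrite /Q big_nat1 subn0 qb0 expr0 !mulr1.
elim: m => [|m IH]; first by rewrite Qrec expr0 subrr mul0r.
by rewrite Qrec IH mulr0.
Qed.


Lemma Pval m c B : P m c B = q ^+ 'C(m, 2) * qbinom q B m.
Proof.
elim: m c B => [|m IH] c B.
  by rewrite /P big_nat1 subnn !qb0 !muln0 addn0 !expr0 !mul1r.
elim: c B => [|c IHc] B.
  elim: B => [|B IHB].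
    by rewrite P00 Qval qb_gt // mulr0.
  rewrite rec1 IHB IH (@pascal1 F q hq) bin2S exprD; ring.
rewrite rec2 IHc IH (@pascal2 F q hq) bin2S.
case: (leqP m B) => hmB.
  have e : q ^+ ('C(m, 2) + m) * q ^+ (B - m) = q ^+ B * q ^+ 'C(m, 2).
    by rewrite -!exprD; congr (_ ^+ _); lia.
  rewrite mulrDr mulrA e; ring.
rewrite (@qb_gt F q _ _ hmB) !mulr0 addr0 subr0 //.
Qed.
End PP.


Lemma trunc (R : nmodType) (f : nat -> R) A B :
  (forall i, (A <= i)%N -> f i = 0) -> (A <= B)%N ->
  \sum_(0 <= i < B) f i = \sum_(0 <= i < A) f i.
Proof.
move=> h hAB; rewrite (big_cat_nat (leq0n A) hAB) /=.
rewrite [X in _ + X]big1_seq ?addr0 //.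
move=> i /andP [_]; rewrite mem_index_iota => /andP [hi _]; exact: h.
Qed.

Ltac kl k := let K := fresh "K" in let eK := fresh "eK" in
  (have [K eK] : exists K, k = K.+1 by (exists k.-1; lia));
  rewrite eK ?subn1 /= ?mulSn ?mulnS; nia.

Section QF.
Variable F : fieldType.
Variables q x : F.
Variable k : nat.
Hypothesis hk : (1 <= k)%N.
Hypothesis hq : forall i : nat, (0 < i)%N -> q ^+ i != 1.

Lemma size_qs N : size (qfib_seq k x q N) = N.+1.
Proof. by elim: N => [|N IH] //=; rewrite size_rcons IH. Qed.

Lemma qs_nth N M i : (i <= N)%N -> (N <= M)%N ->
  nth 0 (qfib_seq k x q M) i = nth 0 (qfib_seq k x q N) i.
Proof.
move=> hi; elim: M => [|M IH] hNM.
  by have -> : N = 0%N by lia.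
case: (ltngtP N M.+1) => h; last by rewrite h.
  by rewrite /= nth_rcons size_qs ifT ?IH //; lia.
by lia.
Qed.

Lemma qfibS N : qfib k x q N.+1 = if (N.+1 < k)%N then x ^+ N.+1
  else x * qfib k x q N + q ^+ (N.+1 - k) * qfib k x q (N.+1 - k).
Proof.
rewrite /qfib /= nth_rcons size_qs ltnn eqxx.
case: ifP => // h.
congr (_ + _ * _); rewrite /qfib; apply: qs_nth; lia.
Qed.

Lemma qfib_small n : (n < k)%N -> qfib k x q n = x ^+ n.
Proof. by case: n => [|n] h; [rewrite /qfib /= expr0 | rewrite qfibS h]. Qed.

Lemma qfib_rec n : qfib k x q (n + k) = x * qfib k x q (n + k).-1 + q ^+ n * qfib k x q n.
Proof.
have -> : (n + k = (n + k).-1.+1)%N by lia.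
rewrite qfibS ifF; last lia.
by rewrite (_ : ((n + k).-1.+1 - k = n)%N) //; lia.
Qed.

Definition a n i := q ^+ (k * 'C(i, 2)) * qbinom q (n - (k - 1) * i) i.
Definition G n := \sum_(0 <= i < n.+1) a n i * x ^+ (n - k * i).

Lemma a0 n i : (n < k * i)%N -> a n i = 0.
Proof. move=> h; rewrite /a qb_gt ?mulr0 //; nia. Qed.

Lemma G_range n M : (n < k * M)%N -> G n = \sum_(0 <= i < M) a n i * x ^+ (n - k * i).
Proof.
move=> h; rewrite /G.
case: (leqP M n.+1) => hM.
  apply: trunc => // i hi; rewrite a0 ?mul0r //; nia.
symmetry; apply: trunc => [i hi|]; last exact: ltnW.
rewrite a0 ?mul0r //; nia.
Qed.

Lemma a_0 n : a n 0 = 1.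
Proof. by rewrite /a muln0 subn0 qb0 muln0 expr0 mul1r. Qed.

Lemma qfibG n : qfib k x q n = G n.
Proof.
elim/ltn_ind: n => n IH.
case: (ltnP n k) => hn.
  rewrite qfib_small // (@G_range n 1) ?muln1 // big_nat1 a_0 mul1r muln0 subn0 //.
have [p hp] : exists p, n = (p + k)%N by exists (n - k)%N; lia.
rewrite hp qfib_rec !IH; try lia.
rewrite (@G_range (p + k).-1 (p + k).+1); last nia.
rewrite (@G_range p (p + k)); last nia.
rewrite /G big_distrr /= (big_distrr (q ^+ p)) /=.
pose T2 i := if i is i'.+1 then q ^+ p * (a p i' * x ^+ (p - k * i')) else 0.
rewrite (_ : \sum_(0 <= i < p + k) q ^+ p * (a p i * x ^+ (p - k * i)) = \sum_(0 <= i < (p + k).+1) T2 i); last first.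
  by rewrite big_nat_recl //= add0r.
rewrite -big_split /=; apply: eq_big_nat => i /andP [_ hi].
case: i hi => [|j] hi.
  rewrite /T2 !a_0 !mul1r addr0 muln0 !subn0 -exprS; congr (_ ^+ _); lia.
rewrite /T2.
case: (leqP (k * j) p) => hjp; last first.
  { rewrite !a0; first by rewrite !mul0r !mulr0 addr0.
  all: move: hjp; kl k. }
have [s ->] : exists s, p = (k * j + s)%N by exists (p - k * j)%N; lia.
have e1 : (k * j + s + k - (k - 1) * j.+1 = (s + j).+1)%N by kl k.
have e2 : ((k * j + s + k - 1) - (k - 1) * j.+1 = s + j)%N by kl k.
have e3 : (k * j + s - (k - 1) * j = s + j)%N by kl k.
have e4 : (k * j + s + k - k * j.+1 = s)%N by kl k.
have e5 : (k * j + s - k * j = s)%N by kl k.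
rewrite -subn1 /a e1 e2 e3 e4 e5 (@pascal2 F q hq) addnK !bin2S.
have eq : q ^+ (k * ('C(j, 2) + j)) = q ^+ (k * j) * q ^+ (k * 'C(j, 2)).
  by rewrite -exprD mulnDr addnC.
rewrite eq exprD.
case: s {hjp} e1 e2 e3 e4 e5 => [|s] _ _ _ _ _.
  rewrite add0n (@qb_gt F q j j.+1 (ltnSn j)) !expr0; ring.
have ex : (k * j + s.+1 + k - 1 - k * j.+1 = s)%N by kl k.
rewrite ex (exprS x); ring.
Qed.
End QF.


Lemma bin2D a b : 'C(a + b, 2) = ('C(a, 2) + a * b + 'C(b, 2))%N.
Proof.
elim: b => [|b IH]. by rewrite addn0 muln0 addn0 (_ : 'C(0, 2) = 0) // addn0.
rewrite addnS binS IH bin1 binS bin1. lia.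
Qed.

Lemma tri (R : nmodType) n (g : nat -> nat -> R) :
  \sum_(0 <= j < n.+1) \sum_(0 <= d < j.+1) g j d
  = \sum_(0 <= d < n.+1) \sum_(d <= j < n.+1) g j d.
Proof.
elim: n => [|n IH]; first by rewrite !big_nat1.
rewrite big_nat_recr //= IH [RHS]big_nat_recr //= big_nat1.
rewrite [X in _ + X = _]big_nat_recr //= addrA; congr (_ + _).
rewrite -big_split /=; apply: eq_big_nat => d /andP [_ hd].
by rewrite [in RHS]big_nat_recr // ltnW.
Qed.

Theorem mainTheorem17 (F : fieldType) (q x : F)
  (hq : forall i : nat, (0 < i)%N -> q ^+ i != 1)
  (k r n : nat) (hk : (1 <= k)%N) (hr : (r < k)%N) :
  \sum_(0 <= j < n.+1)
     (-1) ^+ (n - j) * qbinom q (n + r) (n - j)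
     * q ^+ ((k - 1) * ('C(n, 2) - 'C(j, 2)))
     * qfib k x q (k * j + r)
  = x ^+ (n + r) * qfib k x q ((k - 1) * n).
Proof.
have hqG := fun m => @qfibG F q x k hk hq m.
have hGr := fun m M => @G_range F q x k hk m M.
have [K eK] : exists K, k = K.+1 by exists k.-1; lia.
subst k.
have -> : (K.+1 - 1 = K)%N by lia.
rewrite hqG (hGr _ n.+1); last nia.
rewrite [in RHS]big_nat_rev /= [RHS]big_distrr /=.
under eq_big_nat => j /andP [_ hj].
  rewrite hqG (hGr _ j.+1); last (rewrite !mulSn !mulnS; nia).
  rewrite big_nat_rev /= big_distrr /=.
  over.
rewrite tri /=; apply: eq_big_nat => d /andP [_ hd].
have [m hm] : exists m, n = (d + m)%N by exists (n - d)%N; lia.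
subst n.
rewrite -{1}[d]add0n big_addn (_ : ((d + m).+1 - d = m.+1)%N); last lia.
rewrite (_ : (0 + (d + m).+1 - d.+1 = m)%N); last lia.
transitivity (x ^+ (K.+1 * d + r) * q ^+ (K * 'C(m, 2)) * P F q m (d + r) (K * d)); last first.
  rewrite (@Pval F q hq) /a (_ : ((K.+1 - 1) * m = K * m)%N); last lia.
  rewrite (_ : (K * (d + m) - K * m = K * d)%N); last nia.
  case: (leqP m (K * d)) => hmd; last first.
    by rewrite (@qb_gt F q _ _ hmd) !mulr0 mul0r mulr0.
  rewrite (_ : (K.+1 * 'C(m, 2) = K * 'C(m, 2) + 'C(m, 2))%N); last lia.
  have ex : x ^+ (d + m + r) * x ^+ (K * (d + m) - K.+1 * m) = x ^+ (K.+1 * d + r).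
    by rewrite -!exprD; congr (_ ^+ _); nia.
  rewrite [RHS](_ : _ = (x ^+ (d + m + r) * x ^+ (K * (d + m) - K.+1 * m)) * (q ^+ (K * 'C(m, 2) + 'C(m, 2)) * qbinom q (K * d) m)); last ring.
  rewrite ex (exprD q); ring.
rewrite /P big_distrr /=; apply: eq_big_nat => i /andP [_ hi].
have [e he] : exists e, m = (i + e)%N by exists (m - i)%N; lia.
subst m.
rewrite /a (_ : (0 + (i + d).+1 - d.+1 = i)%N); last lia.
rewrite (_ : (d + (i + e) - (i + d) = i + e - i)%N); last lia.
rewrite (_ : (d + (i + e) + r = i + e + (d + r))%N); last lia.
rewrite (_ : ((K.+1 - 1) * i = K * i)%N); last lia.
rewrite (_ : (K.+1 * (i + d) + r - K * i = K * d + (d + r) + i)%N); last nia.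
rewrite (_ : (K.+1 * (i + d) + r - K.+1 * i = K.+1 * d + r)%N); last nia.
have eq : (K * ('C(d + (i + e), 2) - 'C(i + d, 2)) + K.+1 * 'C(i, 2) = K * 'C(i + e, 2) + ('C(i, 2) + K * d * (i + e - i)))%N.
  rewrite (_ : (d + (i + e) = e + (i + d))%N); last lia.
  rewrite addKn !bin2D; nia.
have eq2 : q ^+ (K * ('C(d + (i + e), 2) - 'C(i + d, 2))) * q ^+ (K.+1 * 'C(i, 2)) = q ^+ (K * 'C(i + e, 2)) * q ^+ ('C(i, 2) + K * d * (i + e - i)).
  by rewrite -!exprD eq.
rewrite [LHS](_ : _ = (q ^+ (K * ('C(d + (i + e), 2) - 'C(i + d, 2))) * q ^+ (K.+1 * 'C(i, 2))) * ((-1) ^+ (i + e - i) * qbinom q (i + e + (d + r)) (i + e - i) * qbinom q (K * d + (d + r) + i) i * x ^+ (K.+1 * d + r))); last ring.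
rewrite eq2; ring.
Qed.
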